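(* Consider optimal control problem OCP-1 (described in the context), let $u_*^1$ be an optimal control with optimal trajectory $(s_*^1,e_*^1,i_*^1,j_*^1)$ and let $\psi_*=(\psi_1^*,\dots,\psi_4^* )$ be the corresponding adjoint function from the Pontryagin maximum principle. Suppose that at some moment $t_0\in[0,T)$ the inequality $A_*(t_0)<0$ holds. Then $\lambda_*^1(t_0)>0.5u_{\max}$.
   Context: Parameters: $\beta_1,\beta_2,\gamma,\rho_1,\rho_2>0$; $\sigma_1,\sigma_2>0$ with $\sigma_1+\sigma_2=1$; $0\le u_{\max}<1$; weights $\alpha_1,\alpha_2\ge0$, $\alpha_3>0$; horizon $T>0$; initial values $s_0,e_0,i_0,j_0>0$ with $s_0+e_0+i_0+j_0\le 1$. The admissible controls are all Lebesgue measurable $u:[0,T]\to[0,u_{\max}]$. The state system is $s'=-s(\beta_1(1-u)^2i+\beta_2(1-u)j)$, $e'=s(\beta_1(1-u)^2i+\beta_2(1-u)j)-\gamma e$, $i'=\sigma_1\gamma e-\rho_1 i$, $j'=\sigma_2\gamma e-\rho_2 j$, with $s(0)=s_0,e(0)=e_0,i(0)=i_0,j(0)=j_0$. OCP-1 is the problem of minimizing $Q(u)=\alpha_1(e(T)+i(T)+j(T))+\alpha_2\int_0^T(e+i+j)\,dt+0.5\alpha_3\int_0^Tu^2\,dt$ over admissible controls. Its Hamiltonian is $H(s,e,i,j,\psi_1,\dots,\psi_4,u)=-s(\beta_1(1-u)^2i+\beta_2(1-u)j)(\psi_1-\psi_2)-\gamma e(\psi_2-\sigma_1\psi_3-\sigma_2\psi_4)-\rho_1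 i\psi_3-\rho_2 j\psi_4-\alpha_2(e+i+j)-0.5\alpha_3u^2$. The adjoint function $\psi_*$ is a nontrivial solution of $\psi_1'=(\beta_1(1-u_*^1)^2i_*^1+\beta_2(1-u_*^1)j_*^1)(\psi_1-\psi_2)$, $\psi_2'=\gamma(\psi_2-\sigma_1\psi_3-\sigma_2\psi_4)+\alpha_2$, $\psi_3'=\beta_1(1-u_*^1)^2s_*^1(\psi_1-\psi_2)+\rho_1\psi_3+\alpha_2$, $\psi_4'=\beta_2(1-u_*^1)s_*^1(\psi_1-\psi_2)+\rho_2\psi_4+\alpha_2$, with $\psi_1(T)=0$, $\psi_2(T)=\psi_3(T)=\psi_4(T)=-\alpha_1$, and $u_*^1(t)$ maximizes $H(s_*^1(t),e_*^1(t),i_*^1(t),j_*^1(t),\psi_*(t),u)$ over $u\in[0,u_{\max}]$ for almost all $t$. Define $A_*(t)=\beta_1s_*^1(t)i_*^1(t)(\psi_1^*(t)-\psi_2^*(t))+0.5\alpha_3$, $B_*(t)=s_*^1(t)(2\beta_1i_*^1(t)+\beta_2j_*^1(t))(\psi_1^*(t)-\psi_2^*(t))$, and, whenever $A_*(t)\neq0$, the indicator function $\lambda_*^1(t)=0.5B_*(t)/A_*(t)$. *)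

(* Defs.v *)
From mathcomp Require Import all_boot all_order all_algebra.
From mathcomp Require Import all_classical all_reals all_analysis.
Set Implicit Arguments. Unset Strict Implicit. Unset Printing Implicit Defensive.
Import Order.TTheory GRing.Theory Num.Theory.
Local Open Scope classical_set_scope.
Local Open Scope ring_scope.

Section SEIJ.
Variable R : realType.

Record params := Params {
  beta1 : R; beta2 : R; gamma : R; rho1 : R; rho2 : R;
  sigma1 : R; sigma2 : R; umax : R;
  alpha1 : R; alpha2 : R; alpha3 : R; horizon : R;
  s0 : R; e0 : R; i0 : R; j0 : R }.

Definition params_ok (p : params) : Prop :=
  0 < beta1 p /\ 0 < beta2 p /\ 0 < gamma p /\ 0 < rho1 p /\ 0 < rho2 p /\
  0 < sigma1 p /\ 0 < sigma2 p /\ sigma1 p + sigma2 p = 1 /\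
  0 <= umax p /\ umax p < 1 /\
  0 <= alpha1 p /\ 0 <= alpha2 p /\ 0 < alpha3 p /\ 0 < horizon p /\
  0 < s0 p /\ 0 < e0 p /\ 0 < i0 p /\ 0 < j0 p /\
  s0 p + e0 p + i0 p + j0 p <= 1.

Definition mu := (@lebesgue_measure R).

Definition admissible (p : params) (u : R -> R) : Prop :=
  measurable_fun `[0, horizon p] u /\
  (forall t, 0 <= t <= horizon p -> 0 <= u t <= umax p).

Definition incid (p : params) (u s i j : R) : R :=
  s * (beta1 p * (1 - u) ^+ 2 * i + beta2 p * (1 - u) * j).
Definition f_s p (u s e i j : R) : R := - incid p u s i j.
Definition f_e p (u s e i j : R) : R := incid p u s i j - gamma p * e.
Definition f_i p (u s e i j : R) : R := sigma1 p * gamma p * e - rho1 p * i.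
Definition f_j p (u s e i j : R) : R := sigma2 p * gamma p * e - rho2 p * j.

(* x solves x' = F a.e. on [0,T] with x(0) = x0 (Caratheodory / integral form:
   F integrable on [0,T] and x t = x0 + int_0^t F for all t in [0,T]) *)
Definition solves_fwd (T x0 : R) (x F : R -> R) : Prop :=
  mu.-integrable `[0, T] (EFin \o F) /\
  forall t, 0 <= t <= T -> x t = x0 + Rintegral mu `[0, t] F.

Definition trajectory (p : params) (u s e i j : R -> R) : Prop :=
  let T := horizon p in
  [/\ solves_fwd T (s0 p) s (fun t => f_s p (u t) (s t) (e t) (i t) (j t)),
      solves_fwd T (e0 p) e (fun t => f_e p (u t) (s t) (e t) (i t) (j t)),
      solves_fwd T (i0 p) i (fun t => f_i p (u t) (s t) (e t) (i t) (j t))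
    & solves_fwd T (j0 p) j (fun t => f_j p (u t) (s t) (e t) (i t) (j t))].

Definition cost (p : params) (u s e i j : R -> R) : R :=
  let T := horizon p in
  alpha1 p * (e T + i T + j T)
  + alpha2 p * Rintegral mu `[0, T] (fun t => e t + i t + j t)
  + 2^-1 * alpha3 p * Rintegral mu `[0, T] (fun t => u t ^+ 2).

Definition optimal (p : params) (u s e i j : R -> R) : Prop :=
  admissible p u /\ trajectory p u s e i j /\
  forall v s' e' i' j', admissible p v -> trajectory p v s' e' i' j' ->
    cost p u s e i j <= cost p v s' e' i' j'.

Definition hamiltonian (p : params) (s e i j ps1 ps2 ps3 ps4 u : R) : R :=
  - s * (beta1 p * (1 - u) ^+ 2 * i + beta2 p * (1 - u) * j) * (ps1 - ps2)
  - gamma p * e * (ps2 - sigma1 p * ps3 - sigma2 p * ps4)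
  - rho1 p * i * ps3 - rho2 p * j * ps4 - alpha2 p * (e + i + j)
  - 2^-1 * alpha3 p * u ^+ 2.

(* x solves x' = F a.e. on [0,T] with terminal value x(T) = xT (integral form) *)
Definition solves_bwd (T xT : R) (x F : R -> R) : Prop :=
  mu.-integrable `[0, T] (EFin \o F) /\
  forall t, 0 <= t <= T -> x t = xT - Rintegral mu `[t, T] F.

Definition pmp_adjoint (p : params) (u s e i j ps1 ps2 ps3 ps4 : R -> R) : Prop :=
  let T := horizon p in
  [/\ solves_bwd T 0 ps1 (fun t =>
        (beta1 p * (1 - u t) ^+ 2 * i t + beta2 p * (1 - u t) * j t)
        * (ps1 t - ps2 t)),
      solves_bwd T (- alpha1 p) ps2 (fun t =>
        gamma p * (ps2 t - sigma1 p * ps3 t - sigma2 p * ps4 t) + alpha2 p),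
      solves_bwd T (- alpha1 p) ps3 (fun t =>
        beta1 p * (1 - u t) ^+ 2 * s t * (ps1 t - ps2 t) + rho1 p * ps3 t
        + alpha2 p)
    & solves_bwd T (- alpha1 p) ps4 (fun t =>
        beta2 p * (1 - u t) * s t * (ps1 t - ps2 t) + rho2 p * ps4 t
        + alpha2 p)] /\
      (exists t, 0 <= t <= T /\
         (ps1 t != 0 \/ ps2 t != 0 \/ ps3 t != 0 \/ ps4 t != 0)) /\
      {ae mu, forall t, 0 <= t <= T -> forall v, 0 <= v <= umax p ->
         hamiltonian p (s t) (e t) (i t) (j t) (ps1 t) (ps2 t) (ps3 t) (ps4 t) v
         <= hamiltonian p (s t) (e t) (i t) (j t) (ps1 t) (ps2 t) (ps3 t) (ps4 t)
              (u t)}.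

Definition A_star (p : params) (s i ps1 ps2 : R -> R) (t : R) : R :=
  beta1 p * s t * i t * (ps1 t - ps2 t) + 2^-1 * alpha3 p.
Definition B_star (p : params) (s i j ps1 ps2 : R -> R) (t : R) : R :=
  s t * (2 * beta1 p * i t + beta2 p * j t) * (ps1 t - ps2 t).
(* indicator function, meaningful when A_star t != 0 *)
Definition lambda_star (p : params) (s i j ps1 ps2 : R -> R) (t : R) : R :=
  2^-1 * B_star p s i j ps1 ps2 t / A_star p s i ps1 ps2 t.

End SEIJ.

(* Main.v *)
Require Import Defs.
From mathcomp Require Import all_boot all_order all_algebra.
From mathcomp Require Import all_classical all_reals all_analysis.
From mathcomp Require Import ring lra.
Import Order.TTheory GRing.Theory Num.Theory.
Import numFieldNormedType.Exports.
Local Open Scope classical_set_scope.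
Local Open Scope ring_scope.

Lemma cont_eps {R : realType} (f : R -> R) (a b z : R) :
  {within `[a, b], continuous f} -> a <= z <= b ->
  forall e, 0 < e -> exists2 d, 0 < d &
    forall y, a <= y <= b -> `|z - y| < d -> `|f z - f y| < e.
Proof.
move=> cf zab e e0.
move/subspace_continuousP : cf => /(_ z).
rewrite /= in_itv/= zab => /(_ isT).
move=> /cvgrPdist_lt /(_ e e0).
rewrite near_withinE => /nbhs_ballP[d /= d0 H].
exists d => // y yab xy; apply: H => //=.
Qed.

Lemma diff_int {R : realType} (T x0 : R) (x F : R -> R) :
  solves_fwd T x0 x F -> forall t r, 0 <= t -> t <= r -> r <= T ->
  x r - x t = Rintegral (@mu R) `]t, r] F.
Proof.
move=> [iF hx] t r t0 tr rT.
rewrite !hx ?t0 ?(le_trans t0 tr) ?(le_trans tr rT) ?tr ?rT //.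
rewrite opprD addrACA subrr add0r.
have := @Rintegral_itvB R F (BLeft 0) (BRight r) t.
rewrite /mu; apply.
- apply: integrableS iF => //; apply: subset_itvl; by rewrite bnd_simp.
- by rewrite bnd_simp.
- by rewrite bnd_simp.
Qed.

Lemma int_lb (R : realType) (t r c : R) (F : R -> R) :
  (@mu R).-integrable `]t, r] (EFin \o F) -> t <= r ->
  (forall y, t < y <= r -> c <= F y) ->
  c * (r - t) <= Rintegral (@mu R) `]t, r] F.
Proof.
move=> iF tr H.
have ic : (@mu R).-integrable `]t, r] (EFin \o cst c).
  apply: (@integrableS _ _ _ (@mu R) `[t, r]) => //.
    exact: subset_itv_oc_cc.
  apply: continuous_compact_integrable; first exact: segment_compact.
  apply: continuous_in_subspaceT => y _; exact: cst_continuous.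
have -> : c * (r - t) = Rintegral (@mu R) `]t, r] (cst c).
  rewrite Rintegral_cst//= /mu lebesgue_measure_itv/= lte_fin.
  move: tr; rewrite le_eqVlt => /predU1P[->|tr]; first by rewrite ltxx subrr mulr0.
  by rewrite tr /=.
apply: (le_Rintegral _ ic iF) => // y /=; rewrite in_itv/= => /andP[ty yr].
Qed.

Lemma no_hit {R : realType} (T x0 tau K : R) (x F : R -> R) :
  solves_fwd T x0 x F -> {within `[0, T], continuous x} ->
  0 < tau -> tau <= T -> 0 <= K ->
  (forall r, 0 <= r < tau -> 0 < x r) -> x tau = 0 ->
  (forall r, 0 <= r <= tau -> - (K * x r) <= F r) -> False.
Proof.
move=> sol cx tau0 tauT K0 pos xtau lb.
pose del := (2 * (K + 1))^-1.
have del0 : 0 < del by rewrite invr_gt0; lra.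
have Kdel : K * del <= 2^-1.
  rewrite /del ler_pdivrMr; last by lra.
  lra.
pose t := Num.max 0 (tau - del).
have t0 : 0 <= t by rewrite le_max lexx.
have ttau : t < tau by rewrite gt_max tau0 /=; lra.
have tdel : tau - t <= del.
  have : tau - del <= t by rewrite le_max lexx orbT.
  lra.
have ctx : {within `[t, tau], continuous x}.
  apply: continuous_subspaceW cx; apply: subset_itvScc; rewrite bnd_simp //.
have [c cI cmax] := EVT_max (ltW ttau) ctx.
move: cI; rewrite in_itv/= => /andP[tc ctau].
have xt : 0 < x t by apply: pos; rewrite t0 ttau.
have xc : 0 < x c.
  apply: lt_le_trans xt _; apply: cmax; by rewrite in_itv/= lexx (ltW ttau).
have := diff_int _ _ _ _ sol c tau (le_trans t0 tc) ctau tauT.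
rewrite xtau => eq.
have iF : (@mu R).-integrable `]c, tau] (EFin \o F).
  case: sol => iF _; apply: integrableS iF => //.
  apply: subset_itvScc; rewrite bnd_simp //; exact: le_trans t0 tc.
have := @int_lb R c tau (- (K * x c)) F iF ctau.
rewrite -eq.
have H : forall y, c < y <= tau -> - (K * x c) <= F y.
  move=> y /andP[cy ytau].
  apply: le_trans (lb y _); last first.
    by rewrite ytau andbT; apply: le_trans (le_trans t0 tc) (ltW cy).
  rewrite lerN2; apply: ler_wpM2l => //; apply: cmax.
  by rewrite in_itv/= ytau andbT; apply: le_trans tc (ltW cy).
move=> /(_ H) h.
have h2 : K * (tau - c) <= 2^-1.
  apply: le_trans Kdel; apply: ler_wpM2l => //; lra.
have h3 : x c * (K * (tau - c)) <= x c * 2^-1 by apply: ler_wpM2l => //; exact: ltW.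
nra.
Qed.

Lemma sol_cont {R : realType} (T x0 : R) (x F : R -> R) :
  0 <= T -> solves_fwd T x0 x F -> {within `[0, T], continuous x}.
Proof.
move=> T0 [iF hx].
have c1 := parameterized_integral_continuous T0 iF.
have c2 : {within `[0, T], continuous (fun t => x0 + parameterized_integral (@lebesgue_measure R) 0 t F)}.
  apply: (@within_continuousD _ _ _ _ (fun _ => x0)) => //.
  apply: continuous_in_subspaceT => y _; exact: cst_continuous.
apply: subspace_eq_continuous c2 => t; rewrite inE/= in_itv/= => tI.
rewrite /from_subspace /= hx //.
Qed.

Lemma sol_init {R : realType} (T x0 : R) (x F : R -> R) :
  0 <= T -> solves_fwd T x0 x F -> x 0 = x0.
Proof.
move=> T0 [_ hx]; rewrite hx ?lexx ?T0 //.
by rewrite set_itv1 Rintegral_set1 addr0.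
Qed.

Lemma pos_near {R : realType} (T z : R) (x : R -> R) :
  {within `[0, T], continuous x} -> 0 <= z <= T -> 0 < x z ->
  exists2 d, 0 < d & forall y, 0 <= y <= T -> `|z - y| < d -> 0 < x y.
Proof.
move=> cx zI xz.
have [d d0 H] := cont_eps _ _ _ _ cx zI _ xz.
exists d => // y yI zy; have := H y yI zy.
rewrite ltr_norml => /andP[h1 h2]; lra.
Qed.

Lemma nonneg_limit {R : realType} (T tau : R) (x : R -> R) :
  {within `[0, T], continuous x} -> 0 <= tau <= T -> 0 < x 0 ->
  (forall r, 0 <= r < tau -> 0 < x r) -> 0 <= x tau.
Proof.
move=> cx /andP[tau0 tauT] x0 pos.
rewrite leNgt; apply/negP => xneg.
have [d d0 H] := cont_eps _ _ _ _ cx (introT andP (conj tau0 tauT)) _ (ltac:(lra) : 0 < - x tau).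
move: tau0; rewrite le_eqVlt => /predU1P[tau0|tau0].
  by move: xneg; rewrite -tau0 => /lt_trans /(_ x0); rewrite ltxx.
pose r := Num.max 0 (tau - d / 2).
have r0 : 0 <= r by rewrite le_max lexx.
have rtau : r < tau by rewrite gt_max tau0 /=; lra.
have rd : tau - d / 2 <= r by rewrite le_max lexx orbT.
have := H r _ _.
rewrite r0 (le_trans (ltW rtau) tauT) => /(_ isT).
have xr := pos r (introT andP (conj r0 rtau)).
rewrite gtr0_norm ?subr_gt0 //; last first.
move=> /(_ ltac:(lra)); rewrite ltr_norml => /andP[h1 h2]; lra.
Qed.

Theorem lemma4 (R : realType) (p : params R) (u s e i j ps1 ps2 ps3 ps4 : R -> R)
  (t0 : R) :
  params_ok p ->
  optimal p u s e i j ->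
  pmp_adjoint p u s e i j ps1 ps2 ps3 ps4 ->
  0 <= t0 < horizon p ->
  A_star p s i ps1 ps2 t0 < 0 ->
  lambda_star p s i j ps1 ps2 t0 > 2^-1 * umax p.
Proof.
move=> pok [[_ ubd] [[ss se si sj] _]] _ /andP[t00 t0T] Aneg.
case: pok => b10 [b20 [g0 [r10 [r20 [sg10 [sg20 [sgs [um0 [um1 [a10 [a20 [a30
  [T0 [s00 [e00 [i00 [j00 _]]]]]]]]]]]]]]]]].
set T := horizon p in t0T ubd ss se si sj T0.
have T0' : 0 <= T by exact: ltW.
have cs := sol_cont _ _ _ _ T0' ss; have ce := sol_cont _ _ _ _ T0' se.
have ci := sol_cont _ _ _ _ T0' si; have cj := sol_cont _ _ _ _ T0' sj.
have is0 := sol_init _ _ _ _ T0' ss; have ie0 := sol_init _ _ _ _ T0' se.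
have ii0 := sol_init _ _ _ _ T0' si; have ij0 := sol_init _ _ _ _ T0' sj.
pose P r := 0 < s r /\ 0 < e r /\ 0 < i r /\ 0 < j r.
have P0 : P 0 by rewrite /P is0 ie0 ii0 ij0.
pose S := [set t | 0 <= t <= t0 /\ forall r, 0 <= r <= t -> P r].
have S0 : S 0.
  split; first by rewrite lexx t00.
  move=> r; rewrite -eq_le => /eqP <-; exact: P0.
have hS : has_sup S.
  split; first by exists 0.
  by exists t0 => y [/andP[_ ?] _].
pose tau := sup S.
have tau0 : 0 <= tau by exact: sup_upper_bound hS _ S0.
have taut0 : tau <= t0 by apply: ge_sup; [exists 0 | move=> y [/andP[_ ?] _]].
have tauT : tau <= T by apply: le_trans taut0 (ltW t0T).
have tauI : 0 <= tau <= T by rewrite tau0 tauT.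
have Pa : forall r, 0 <= r < tau -> P r.
  move=> r /andP[r0 rtau].
  have [t [tI tP] tr] := sup_adherent (ltac:(lra) : 0 < tau - r) hS.
  apply: tP; rewrite r0 /=; rewrite -/tau in tr; lra.
have Ns : 0 <= s tau.
  apply: (nonneg_limit _ _ _ cs tauI); [by case: P0 | by move=> r /Pa[]].
have Ne : 0 <= e tau.
  apply: (nonneg_limit _ _ _ ce tauI); [by case: P0 => _ [] | by move=> r /Pa[_ []]].
have Ni : 0 <= i tau.
  apply: (nonneg_limit _ _ _ ci tauI); [by case: P0 => _ [_ []] | by move=> r /Pa[_ [_ []]]].
have Nj : 0 <= j tau.
  apply: (nonneg_limit _ _ _ cj tauI); [by case: P0 => _ [_ [_]] | by move=> r /Pa[_ [_ [_]]]].
have N : forall r, 0 <= r <= tau ->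
    0 <= s r /\ 0 <= e r /\ 0 <= i r /\ 0 <= j r.
  move=> r /andP[r0 rt]; case: (ltP r tau) => [rlt|rge].
    have [? [? [? ?]]] := Pa r (introT andP (conj r0 rlt)).
    by split; [exact: ltW | split; [exact: ltW | split; exact: ltW]].
  have -> : r = tau by apply/eqP; rewrite eq_le rt rge.
  by [].
have ur : forall r, 0 <= r <= tau -> 0 <= 1 - u r <= 1.
  move=> r /andP[r0 rt]; have /andP[h1 h2] := ubd r (introT andP (conj r0 (le_trans rt tauT))).
  apply/andP; split; lra.
have inc0 : forall r, 0 <= r <= tau -> 0 <= incid p (u r) (s r) (i r) (j r).
  move=> r rI; have [hs [_ [hi hj]]] := N r rI; have /andP[w0 w1] := ur r rI.
  rewrite /incid; apply: mulr_ge0 => //; apply: addr_ge0; apply: mulr_ge0 => //;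
    apply: mulr_ge0 => //; [exact: ltW | exact: exprn_ge0 | exact: ltW].
have Ptau : P tau.
  have := tau0; rewrite le_eqVlt => /predU1P[t0e|tpos]; first by rewrite -t0e.
  have tI : forall r, 0 <= r <= tau -> r \in `[0, tau] by move=> r rI; rewrite in_itv.
  have sub : `[0, tau] `<=` `[0, T] by apply: subset_itvScc; rewrite bnd_simp.
  have [ci' ciI imax] := EVT_max tau0 (continuous_subspaceW sub ci).
  have [cj' cjI jmax] := EVT_max tau0 (continuous_subspaceW sub cj).
  move: ciI cjI; rewrite !in_itv /= => ciI cjI.
  have [_ [_ [Mi0 _]]] := N ci' ciI; have [_ [_ [_ Mj0]]] := N cj' cjI.
  have [hs|hs] := ltP 0 (s tau); last first.
    exfalso.
    have K0 : 0 <= beta1 p * i ci' + beta2 p * j cj'.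
      by apply: addr_ge0; apply: mulr_ge0 => //; exact: ltW.
    apply: (no_hit _ _ _ _ _ _ ss cs tpos tauT K0).
    - by move=> r /Pa[].
    - by apply/eqP; rewrite eq_le hs Ns.
    move=> r rI /=; have [hs' [_ [hi hj]]] := N r rI; have /andP[w0 w1] := ur r rI.
    rewrite /f_s /incid lerN2 mulrC; apply: ler_wpM2r => //.
    apply: lerD.
      rewrite -mulrA ler_pM2l // (le_trans _ (imax r (tI r rI))) // ler_piMl //.
      by rewrite expr_le1.
    rewrite -mulrA ler_pM2l // (le_trans _ (jmax r (tI r rI))) // ler_piMl //.
  have [he|he] := ltP 0 (e tau); last first.
    exfalso.
    apply: (no_hit _ _ _ (gamma p) _ _ se ce tpos tauT (ltW g0)).
    - by move=> r /Pa[_ []].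
    - by apply/eqP; rewrite eq_le he Ne.
    move=> r rI /=; have := inc0 r rI; rewrite /f_e; lra.
  have [hi|hi] := ltP 0 (i tau); last first.
    exfalso.
    apply: (no_hit _ _ _ (rho1 p) _ _ si ci tpos tauT (ltW r10)).
    - by move=> r /Pa[_ [_ []]].
    - by apply/eqP; rewrite eq_le hi Ni.
    move=> r rI /=; have [_ [he' _]] := N r rI.
    have : 0 <= sigma1 p * gamma p * e r by rewrite !mulr_ge0 // ltW.
    rewrite /f_i; lra.
  have [hj|hj] := ltP 0 (j tau); last first.
    exfalso.
    apply: (no_hit _ _ _ (rho2 p) _ _ sj cj tpos tauT (ltW r20)).
    - by move=> r /Pa[_ [_ [_]]].
    - by apply/eqP; rewrite eq_le hj Nj.
    move=> r rI /=; have [_ [he' _]] := N r rI.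
    have : 0 <= sigma2 p * gamma p * e r by rewrite !mulr_ge0 // ltW.
    rewrite /f_j; lra.
  by [].
have taueq : tau = t0.
  apply/eqP; rewrite eq_le taut0 /=; rewrite leNgt; apply/negP => tlt.
  case: Ptau => hs [he [hi hj]].
  have [ds ds0 Hs] := pos_near _ _ _ cs tauI hs.
  have [de de0 He] := pos_near _ _ _ ce tauI he.
  have [di di0 Hi] := pos_near _ _ _ ci tauI hi.
  have [dj dj0 Hj] := pos_near _ _ _ cj tauI hj.
  pose d := Num.min (Num.min ds de) (Num.min di dj).
  have d0 : 0 < d by rewrite /d !lt_min ds0 de0 di0 dj0.
  have := lexx d; rewrite {2}/d !le_min => /andP[/andP[hds hde] /andP[hdi hdj]].
  pose r' := Num.min (tau + d / 2) t0.
  have hr1 : r' <= tau + d / 2 by rewrite /r' ge_min lexx.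
  have hr2 : r' <= t0 by rewrite /r' ge_min lexx orbT.
  have hr3 : tau < r' by rewrite /r' lt_min tlt andbT; lra.
  have : S r'.
    split; first by rewrite hr2 andbT; lra.
    move=> r /andP[r0 rr].
    case: (ltP r tau) => [rlt|rge]; first by apply: Pa; rewrite r0 rlt.
    have rT : 0 <= r <= T by rewrite r0 /=; lra.
    have hn : `|tau - r| < d by rewrite ler0_norm; lra.
    split; first by apply: Hs => //; lra.
    split; first by apply: He => //; lra.
    split; first by apply: Hi => //; lra.
    by apply: Hj => //; lra.
  move=> /(sup_upper_bound hS); rewrite -/tau; lra.
have [hs [he [hi hj]]] : P t0 by rewrite -taueq.
move: Aneg; rewrite /lambda_star /A_star /B_star => Aneg.
set z := s t0 * (ps1 t0 - ps2 t0).
set A := beta1 p * s t0 * i t0 * (ps1 t0 - ps2 t0) + 2^-1 * alpha3 p in Aneg *.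
have hX : beta1 p * s t0 * i t0 * (ps1 t0 - ps2 t0) = beta1 p * i t0 * z.
  by rewrite /z; ring.
have hB : s t0 * (2 * beta1 p * i t0 + beta2 p * j t0) * (ps1 t0 - ps2 t0)
    = 2 * (beta1 p * i t0 * z) + beta2 p * j t0 * z.
  by rewrite /z; ring.
rewrite hB ltr_ndivlMr //.
have hA : A = beta1 p * i t0 * z + 2^-1 * alpha3 p by rewrite /A hX.
have bi : 0 < beta1 p * i t0 by apply: mulr_gt0.
have z0 : z < 0.
  rewrite ltNge; apply/negP => z0.
  have : 0 <= beta1 p * i t0 * z by apply: mulr_ge0 => //; exact: ltW.
  lra.
have bjz : beta2 p * j t0 * z <= 0.
  by apply: mulr_ge0_le0; [apply: mulr_ge0; exact: ltW | exact: ltW].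
have hAu : A <= 2^-1 * umax p * A.
  have : 0 <= (1 - 2^-1 * umax p) * (- A) by apply: mulr_ge0; lra.
  nra.
lra.
Qed.
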